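(* Let $f\in\mathrm{LC}$ satisfy (H$_1$): there exist $\alpha,\beta\in L^1_{loc}$ with $\beta\ge0$ such that $2\langle f(t,x),x\rangle\le\alpha(t)|x|^2+\beta(t)$ for a.e. $(t,x)\in\mathbb R^{1+N}$. If $x(\cdot)$ is a solution of $\dot x=f(t,x)$ defined on an interval $I$, then $2\langle f(t,x(t)),x(t)\rangle\le\alpha(t)|x(t)|^2+\beta(t)$ for a.e. $t\in I$.
   Context: $\mathrm{LC}$: Borel measurable $f:\mathbb R\times\mathbb R^N\to\mathbb R^N$ such that for every compact $K$ there are $m^K,l^K\in L^1_{loc}$ with $|f(t,x)|\le m^K(t)$ and $|f(t,x)-f(t,y)|\le l^K(t)|x-y|$ for $x,y\in K$, a.e. $t$. Solutions are in the Carathéodory sense (absolutely continuous, satisfying the equation a.e.). $\langle\cdot,\cdot\rangle$ is the Euclidean inner product. *)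

(* Defs.v *)
From HB Require Import structures.
From mathcomp Require Import all_boot all_order all_algebra.
From mathcomp Require Import all_classical all_reals all_analysis.
Set Implicit Arguments. Unset Strict Implicit. Unset Printing Implicit Defensive.
Import Order.TTheory GRing.Theory Num.Theory.
Import numFieldNormedType.Exports.
Local Open Scope classical_set_scope.
Local Open Scope ring_scope.

Definition dotv (R : realType) (N : nat) (u v : 'rV[R]_N) : R :=
  \sum_(i < N) u 0 i * v 0 i.

Definition enorm (R : realType) (N : nat) (u : 'rV[R]_N) : R :=
  Num.sqrt (dotv u u).

Definition rbox (R : realType) (N : nat) (a b : R) (a' b' : 'rV[R]_N)
  : set (R * 'rV[R]_N) :=
  [set p : R * 'rV[R]_N | (a <= p.1 <= b) /\ forall i, a' 0 i <= p.2 0 i <= b' 0 i].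

Definition rbox_vol (R : realType) (N : nat) (a b : R) (a' b' : 'rV[R]_N) : R :=
  Num.max 0 (b - a) * \prod_(i < N) Num.max 0 (b' 0 i - a' 0 i).

(* S is a Lebesgue-null subset of R^{1+N}: for every eps > 0 it is covered by
   countably many boxes of total volume <= eps (Lebesgue outer measure 0). *)
Definition null_set_RN (R : realType) (N : nat) (S : set (R * 'rV[R]_N)) :=
  forall eps : R, 0 < eps ->
  exists (a b : nat -> R) (a' b' : nat -> 'rV[R]_N),
    S `<=` \bigcup_k rbox (a k) (b k) (a' k) (b' k) /\
    forall m, \sum_(k < m) rbox_vol (a k) (b k) (a' k) (b' k) <= eps.

Definition ae_RN (R : realType) (N : nat) (P : R -> 'rV[R]_N -> Prop) :=
  null_set_RN [set p | ~ P p.1 p.2].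

Definition L1loc (R : realType) (g : R -> R) := locally_integrable setT g.

Definition borel_measurable_RN (R : realType) (N : nat)
  (f : R -> 'rV[R]_N -> 'rV[R]_N) :=
  forall U : set 'rV[R]_N, open U ->
    <<s setT, [set V : set (R * 'rV[R]_N) | open V] >>
      [set p | U (f p.1 p.2)].

Definition LC (R : realType) (N : nat) (f : R -> 'rV[R]_N -> 'rV[R]_N) :=
  borel_measurable_RN f /\
  forall K : set 'rV[R]_N, compact K ->
  exists mK lK : R -> R, L1loc mK /\ L1loc lK /\
    {ae (@lebesgue_measure R), forall t,
       forall x y, K x -> K y ->
         enorm (f t x) <= mK t /\
         enorm (f t x - f t y) <= lK t * enorm (x - y)}.

Definition abs_cont_on (R : realType) (N : nat) (u : R -> 'rV[R]_N) (c d : R) :=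
  forall eps : R, 0 < eps -> exists delta : R, 0 < delta /\
    forall (n : nat) (a b : 'I_n -> R),
      (forall k, c <= a k <= b k /\ b k <= d) ->
      (forall k l, k != l -> b k <= a l \/ b l <= a k) ->
      \sum_(k < n) (b k - a k) < delta ->
      \sum_(k < n) enorm (u (b k) - u (a k)) < eps.

Definition cara_solution (R : realType) (N : nat)
  (f : R -> 'rV[R]_N -> 'rV[R]_N) (I : set R) (x : R -> 'rV[R]_N) :=
  (forall c d, I c -> I d -> c <= d -> abs_cont_on x c d) /\
  {ae (@lebesgue_measure R), forall t, I t ->
     derivable x t 1 /\ 'D_1 x t = f t (x t)}.

(* Main.v *)
Require Import Defs.
From HB Require Import structures.
From mathcomp Require Import all_boot all_order all_algebra.
From mathcomp Require Import all_classical all_reals all_analysis.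
From mathcomp Require Import ring lra measurable_realfun.
Import Order.TTheory GRing.Theory Num.Theory.
Import numFieldNormedType.Exports.
Local Open Scope classical_set_scope.
Local Open Scope ring_scope.
Set Implicit Arguments. Unset Strict Implicit. Unset Printing Implicit Defensive.

Lemma leb_itv (R : realType) (a b : R) :
  (@lebesgue_measure R `[a, b] = (Num.max 0 (b - a))%:E)%E.
Proof.
rewrite lebesgue_measure_itv /= lte_fin.
case: leP => ab.
  by rewrite max_l // subr_le0.
by rewrite max_r ?subr_ge0 ?ltW // EFinB.
Qed.

Lemma int_series (R : realType) (a b c : nat -> R) :
  (forall k, 0 <= c k) ->
  (\int[@lebesgue_measure R]_t \sum_(k <oo) (c k * \1_(`[a k, b k]) t)%:E
   = \sum_(k <oo) (c k * Num.max 0 (b k - a k))%:E)%E.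
Proof.
move=> c0.
rewrite integral_nneseries //; last first.
  by move=> n t _; rewrite lee_fin mulr_ge0.
  by move=> n; apply/measurable_realfun.measurable_EFinP; apply: measurable_realfun.measurable_funM => //;
     apply: measurable_realfun.measurable_indic.
apply: eq_eseriesr => k _.
under eq_integral do rewrite EFinM.
rewrite ge0_integralZl_EFin //; last first.
  by apply/measurable_realfun.measurable_EFinP; apply: measurable_realfun.measurable_indic.
rewrite integral_indic // setIT.
rewrite (_ : _ `[a k, b k]%classic = (Num.max 0 (b k - a k))%:E) ?EFinM //.
apply: eq_trans; first exact: lebesgue_measure_itv.
rewrite /= lte_fin.
case: leP => ab; last by rewrite max_r ?subr_ge0 ?ltW // EFinB.
by rewrite max_l ?subr_le0.
Qed.

Lemma indic_itv (R : realType) (a b t : R) :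
  \1_(`[a, b]%classic) t = ((a <= t <= b)%R)%:R :> R.
Proof.
rewrite indicE (_ : (t \in _) = (a <= t <= b)%R) //.
by apply/idP/idP; rewrite inE /=; rewrite in_itv.
Qed.

Lemma leb_itv' (R : realType) (a b : R) :
  (@lebesgue_measure R `[a, b]%classic = (Num.max 0 (b - a))%:E)%E.
Proof. exact: leb_itv. Qed.

Lemma series_ge_term (R : realType) (u : nat -> R) k :
  (forall n, 0 <= u n) -> ((u k)%:E <= \sum_(n <oo) (u n)%:E)%E.
Proof.
move=> u0; apply: le_trans (nneseries_lim_ge k.+1 _); last first.
  by move=> n _ _; rewrite lee_fin.
rewrite big_nat_recr //=; apply: lee_paddl; last by [].
by apply: sume_ge0 => n _; rewrite lee_fin.
Qed.

Definition blen (R : realType) (N : nat) (a' b' : nat -> 'rV[R]_N)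
  (i : 'I_N) (k : nat) : R := Num.max 0 (b' k 0 i - a' k 0 i).
Definition binb (R : realType) (N : nat) (a' b' : nat -> 'rV[R]_N)
  (i : 'I_N) (k : nat) (s : R) : bool := (a' k 0 i <= s <= b' k 0 i).
Definition gterm (R : realType) (N : nat) (a' b' : nat -> 'rV[R]_N)
  (A : nat -> bool) (m : nat) (z : 'rV[R]_N) (k : nat) : R :=
  (A k)%:R * (\prod_(i < N | (i < m)%N) blen a' b' i k) *
  (\prod_(i < N | (m <= i)%N) (binb a' b' i k (z 0 i))%:R).

Lemma gterm_ge0 (R : realType) (N : nat) (a' b' : nat -> 'rV[R]_N)
  (A : nat -> bool) m z k : 0 <= gterm a' b' A m z k.
Proof.
rewrite /gterm; apply: mulr_ge0; last by apply: prodr_ge0.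
by apply: mulr_ge0 => //; apply: prodr_ge0 => i _; rewrite /blen le_max lexx.
Qed.

Lemma mser (R : realType) (a b c : nat -> R) (D : set R) :
  (forall k, 0 <= c k) ->
  measurable_fun D (fun t : R => (\sum_(k <oo) (c k * \1_(`[a k, b k]%classic) t)%:E : \bar R)%E).
Proof.
move=> c0; apply: (@ge0_emeasurable_sum _ _ _ _ _ xpredT).
  by move=> k t _ _; rewrite lee_fin mulr_ge0.
move=> k _; apply/measurable_realfun.measurable_EFinP.
by apply: measurable_realfun.measurable_funM => //;
     apply: measurable_realfun.measurable_indic.
Qed.

Lemma geo (R : realType) (N : nat) (a' b' : nat -> 'rV[R]_N)
  (A : nat -> bool) (y : 'rV[R]_N) (r : R) : 0 < r ->
  forall m, (m <= N)%N -> forall z : 'rV[R]_N,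
  (forall p : 'rV[R]_N, (forall i : 'I_N, (i < m)%N -> `|p 0 i - y 0 i| <= r) ->
     (forall i : 'I_N, (m <= i)%N -> p 0 i = z 0 i) ->
     exists k, A k /\ forall i, binb a' b' i k (p 0 i)) ->
  (((2 * r) ^+ m)%:E <= \sum_(k <oo) (gterm a' b' A m z k)%:E)%E.
Proof.
move=> r0; elim=> [|m IH] mN z cov.
  have [k [Ak Hk]] := cov z (fun i (h : (i < 0)%N) => False_ind _ (notF h)) (fun i _ => erefl).
  apply: le_trans (series_ge_term k (gterm_ge0 a' b' A 0 z)).
  rewrite expr0 lee_fin /gterm Ak mul1r big_pred0 // mul1r.
  by rewrite big1 // => i _; rewrite Hk.
have mN' : (m < N)%N by [].
pose im : 'I_N := Ordinal mN'.
pose zt t := \row_(j < N) (if j == im then t else z 0 j).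
pose c k := (A k)%:R * (\prod_(i < N | (i < m)%N) blen a' b' i k) *
  \prod_(i < N | (m.+1 <= i)%N) (binb a' b' i k (z 0 i))%:R.
have Hmi : forall i : 'I_N, ((m <= i)%N && (i != im)) = (m.+1 <= i)%N.
  move=> i; rewrite ltn_neqAle andbC; congr (_ && _).
  by rewrite eq_sym -val_eqE.
have Hmi' : forall i : 'I_N, ((i < m.+1)%N && (i != im)) = (i < m)%N.
  by move=> i; rewrite -val_eqE /= ltnS; case: ltngtP.
have c0 : forall k, 0 <= c k.
  move=> k; rewrite /c; apply: mulr_ge0; last by apply: prodr_ge0.
  by apply: mulr_ge0 => //; apply: prodr_ge0 => i _; rewrite /blen le_max lexx.
have E1 : forall t k, gterm a' b' A m (zt t) k =
    c k * \1_(`[a' k 0 im, b' k 0 im]%classic) t.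
  move=> t k; rewrite /gterm /c indic_itv.
  rewrite [\prod_(i < N | (m <= i)%N) _](bigD1 im) ?leqnn //=.
  rewrite /zt mxE eqxx -!mulrA; congr (_ * (_ * _)).
  rewrite mulrC; congr (_ * _).
  rewrite (eq_bigl _ _ Hmi); apply: eq_bigr => i Hi; rewrite mxE.
  suff -> : (i == im) = false by [].
  by apply/negbTE; rewrite -val_eqE /= neq_ltn Hi orbT.
have E2 : forall k, gterm a' b' A m.+1 z k =
    c k * Num.max 0 (b' k 0 im - a' k 0 im).
  move=> k; rewrite /gterm /c [\prod_(i < N | (i < m.+1)%N) _](bigD1 im) //=.
  rewrite (eq_bigl _ _ Hmi') /blen; ring.
have H : forall t, (y 0 im - r <= t <= y 0 im + r) ->
    (((2 * r) ^+ m)%:E <= \sum_(k <oo) (c k * \1_(`[a' k 0 im, b' k 0 im]%classic) t)%:E)%E.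
  move=> t /andP[t1 t2].
  have -> : (\sum_(k <oo) (c k * \1_(`[a' k 0 im, b' k 0 im]%classic) t)%:E =
      \sum_(k <oo) (gterm a' b' A m (zt t) k)%:E)%E.
    by apply: eq_eseriesr => k _; rewrite E1.
  apply: IH; first exact: ltnW.
  move=> p hp1 hp2; apply: cov => i hi.
    have [eim|nim] := eqVneq i im.
      rewrite eim (hp2 im (leqnn _)) /zt mxE eqxx.
      by rewrite ler_norml; apply/andP; split; lra.
    apply: hp1; move: hi nim; rewrite -val_eqE /= ltnS leq_eqVlt.
    by case/orP => [->//|].
  rewrite hp2 ?(ltnW hi) // /zt mxE.
  suff -> : (i == im) = false by [].
  by apply/negbTE; rewrite -val_eqE /= neq_ltn hi orbT.
pose D := `[y 0 im - r, y 0 im + r]%classic.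
have mD : measurable D by exact: measurable_itv.
apply: (@le_trans _ _ (\int[@lebesgue_measure R]_(t in D) ((2 * r) ^+ m)%:E)%E).
  rewrite integral_cst //.
  rewrite (_ : _ D = (Num.max 0 ((y 0 im + r) - (y 0 im - r)))%:E);
    last exact: leb_itv.
  rewrite max_r; last by lra.
  by rewrite -EFinM exprSr (_ : y 0 im + r - (y 0 im - r) = 2 * r) //; ring.
apply: (@le_trans _ _ (\int[@lebesgue_measure R]_(t in D)
    (\sum_(k <oo) (c k * \1_(`[a' k 0 im, b' k 0 im]%classic) t)%:E))%E).
  apply: ge0_le_integral => //.
  - by move=> t _; rewrite lee_fin exprn_ge0 // mulr_ge0 // ltW.
  - exact: mser.
apply: (@le_trans _ _ (\int[@lebesgue_measure R]_(t in setT)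
    (\sum_(k <oo) (c k * \1_(`[a' k 0 im, b' k 0 im]%classic) t)%:E))%E).
  apply: ge0_subset_integral => //; first exact: mser.
  by move=> t _; apply: nneseries_ge0 => k _ _; rewrite lee_fin mulr_ge0.
rewrite int_series //.
by rewrite (eq_eseriesr (fun k _ => congr1 EFin (E2 k))).
Qed.

Lemma cvg_bigsum (R : realType) (T : Type) (F : set_system T) (FF : Filter F)
  (n : nat) (g : 'I_n -> T -> R) (l : 'I_n -> R) :
  (forall i, g i x @[x --> F] --> l i) ->
  \sum_(i < n) g i x @[x --> F] --> \sum_(i < n) l i.
Proof.
move=> H.
have -> : (fun x => \sum_(i < n) g i x) = \sum_(i < n) g i.
  by apply/funext => x; rewrite fct_sumE.
elim/big_ind2 : _ => [|u a v b ha hb|i _]; [exact: cvg_cst | exact: cvgD | exact: H].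
Qed.

Lemma cvg_coord (R : realType) (N : nat) (T : Type) (F : set_system T) (FF : Filter F)
  (u : T -> 'rV[R]_N) (u0 : 'rV[R]_N) (i : 'I_N) :
  u x @[x --> F] --> u0 -> u x 0 i @[x --> F] --> u0 0 i.
Proof.
move=> hu; have := cvg_comp _ _ hu (@coord_continuous _ 1 N 0 i u0); exact.
Qed.

Lemma cvg_dotv (R : realType) (N : nat) (T : Type) (F : set_system T) (FF : Filter F)
  (u v : T -> 'rV[R]_N) (u0 v0 : 'rV[R]_N) :
  u x @[x --> F] --> u0 -> v x @[x --> F] --> v0 ->
  dotv (u x) (v x) @[x --> F] --> dotv u0 v0.
Proof.
move=> hu hv; rewrite /dotv; apply: cvg_bigsum => i.
by apply: cvgM; apply: cvg_coord.
Qed.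

Lemma coord_le_mx (R : realType) (N : nat) (u : 'rV[R]_N) (i : 'I_N) :
  `|u 0 i| <= `|u|.
Proof.
have -> : `|u| = mx_norm u by []. rewrite mx_normrE.
exact: (le_bigmax _ (fun ij : 'I_1 * 'I_N => `|u ij.1 ij.2|) (0, i)).
Qed.

Lemma mx_le_enorm (R : realType) (N : nat) (u : 'rV[R]_N) : `|u| <= enorm u.
Proof.
have -> : `|u| = mx_norm u by []. rewrite mx_normrE.
apply: bigmax_le => [|[i j] _]; first exact: sqrtr_ge0.
rewrite /= ord1 /enorm /dotv -sqrtr_sqr ler_sqrt; last first.
  by apply: sumr_ge0 => k _; rewrite -expr2 sqr_ge0.
rewrite (bigD1 j) //= expr2 lerDl.
by apply: sumr_ge0 => k _; rewrite -expr2 sqr_ge0.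
Qed.

Lemma enorm_le_mx (R : realType) (N : nat) (u : 'rV[R]_N) :
  enorm u <= Num.sqrt N%:R * `|u|.
Proof.
rewrite -[`|u|]ger0_norm // -sqrtr_sqr -sqrtrM // /enorm ler_sqrt; last first.
  by apply: mulr_ge0 => //; rewrite sqr_ge0.
rewrite /dotv mulr_natl -[in X in _ *+ X](card_ord N) -sumr_const.
apply: ler_sum => i _; rewrite -expr2 -real_normK ?num_real //.
rewrite lerXn2r ?nnegrE //; exact: coord_le_mx.
Qed.

Definition Kn (R : realType) (N : nat) (n : nat) : set 'rV[R]_N :=
  [set v : 'rV[R]_N | forall i, `[-(n%:R), n%:R]%classic (v 0 i)].

Lemma KnP (R : realType) (N : nat) n (v : 'rV[R]_N) :
  (forall i, `|v 0 i| <= n%:R) -> Kn n v.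
Proof.
move=> H i; rewrite /= in_itv /= -ler_norml; exact: H.
Qed.

Lemma Kn_compact (R : realType) (N : nat) n : compact (@Kn R N n).
Proof.
have H := @rV_compact R N (fun=> `[-(n%:R), n%:R]%classic) (fun=> @segment_compact _ _ _).
exact: H.
Qed.

Lemma lip_cont (R : realType) (N : nat) (F : 'rV[R]_N -> 'rV[R]_N) (L : nat -> R)
  (y : 'rV[R]_N) :
  (forall n x z, Kn n x -> Kn n z -> enorm (F x - F z) <= L n * enorm (x - z)) ->
  F z @[z --> y] --> F y.
Proof.
move=> Lip; apply/(@cvgrPdist_le _ _ _ _ (nbhs_filter y)) => e e0.
pose n := Num.Def.archi_bound (`|y| + 1).
have hn : `|y| + 1 < n%:R by apply: archi_boundP; rewrite addr_ge0.
pose c := (`|L n| + 1) * (Num.sqrt N%:R + 1).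
have c0 : 0 < c by rewrite mulr_gt0 // ltr_pwDr // sqrtr_ge0.
pose d := Num.min 1 (e / c).
have d0 : 0 < d by rewrite lt_min ltr01 divr_gt0.
apply/nbhs_ballP; exists d => //= z; rewrite -ball_normE /= => hz.
have hK : forall w : 'rV[R]_N, `|y - w| < 1 -> Kn n w.
  move=> w hw; apply: KnP => i.
  have := coord_le_mx (y - w) i; rewrite !mxE => h1.
  have := coord_le_mx y i => h2.
  have h3 : `|w 0 i| <= `|y 0 i| + `|y 0 i - w 0 i|.
    have ew : w 0 i = y 0 i - (y 0 i - w 0 i) by ring.
    by rewrite {1}ew; exact: ler_normB.
  by apply: le_trans h3 _; apply/ltW; apply: lt_trans hn; lra.
have hyK : Kn n y by apply: hK; rewrite subrr normr0.
have hzK : Kn n z by apply: hK; apply: lt_le_trans hz _; rewrite ge_min lexx.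
apply: le_trans (mx_le_enorm _) _.
apply: le_trans (Lip n y z hyK hzK) _.
have hd : d <= e / c by rewrite ge_min lexx orbT.
have h1 := enorm_le_mx (y - z).
have h0 : 0 <= enorm (y - z) := sqrtr_ge0 _.
have hs : 0 <= Num.sqrt (N%:R : R) := sqrtr_ge0 _.
have hL : 0 <= `|L n| := normr_ge0 _.
apply: (@le_trans _ _ (`|L n| * (Num.sqrt N%:R * d))).
  apply: le_trans (ler_wpM2r h0 (ler_norm (L n))) _.
  apply: ler_wpM2l => //; apply: le_trans h1 _; apply: ler_wpM2l => //; exact: ltW.
apply: (@le_trans _ _ (c * d)).
  rewrite /c; nra.
apply: le_trans (ler_wpM2l (ltW c0) hd) _.
by rewrite mulrC divfK ?gt_eqF.
Qed.

Lemma local_fail (R : realType) (N : nat) (F : 'rV[R]_N -> 'rV[R]_N) (L : nat -> R)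
  (a b : R) (y : 'rV[R]_N) :
  (forall n x z, Kn n x -> Kn n z -> enorm (F x - F z) <= L n * enorm (x - z)) ->
  ~ (2 * dotv (F y) y <= a * dotv y y + b) ->
  exists r, 0 < r /\ forall p : 'rV[R]_N, (forall i, `|p 0 i - y 0 i| <= r) ->
    ~ (2 * dotv (F p) p <= a * dotv p p + b).
Proof.
move=> Lip hf.
pose h z := a * dotv z z + b - 2 * dotv (F z) z.
have FF : Filter (nbhs y) := nbhs_filter y.
have hc : h z @[z --> y] --> h y.
  apply: cvgB; first apply: cvgD.
  - by apply: cvgM; [exact: cvg_cst | apply: cvg_dotv; exact: cvg_id].
  - exact: cvg_cst.
  apply: cvgM; first exact: cvg_cst.
  apply: cvg_dotv; last exact: cvg_id.
  have := @lip_cont R N F L y Lip; exact.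
have hy : h y < 0.
  by rewrite /h subr_lt0 ltNge; apply/negP.
have : nbhs y [set z | h z < 0] by exact: (cvgr_lt _ hc _ hy).
move=> /nbhs_ballP [e /= e0 He].
exists (e / 2); split; first by rewrite divr_gt0.
move=> p hp; have : h p < 0.
  apply: He; rewrite -ball_normE /=.
  apply: (@le_lt_trans _ _ (e / 2)); last by lra.
  have -> : `|y - p| = mx_norm (y - p) by [].
  rewrite mx_normrE; apply: bigmax_le => [|[i j] _]; first by rewrite ltW // divr_gt0.
  by rewrite /= ord1 !mxE distrC; exact: hp.
by rewrite /h subr_lt0 ltNge => /negP.
Qed.


Lemma nneseries_le_bound (R : realType) (u : nat -> R) (x : R) :
  (forall n, 0 <= u n) -> (forall m, \sum_(k < m) u k <= x) ->
  (\sum_(k <oo) (u k)%:E <= x%:E)%E.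
Proof.
move=> u0 H; apply: lime_le.
  by apply: is_cvg_nneseries => n _ _; rewrite lee_fin.
by apply: nearW => m; rewrite sumEFin big_mkord lee_fin.
Qed.

Lemma small_inv (R : realType) (r : R) : 0 < r ->
  exists n : nat, (n.+1%:R : R)^-1 <= r.
Proof.
move=> r0; exists (Num.Def.archi_bound r^-1).
have r1 : 0 < r^-1 by rewrite invr_gt0.
have h := @archi_boundP _ r^-1 (ltW r1).
rewrite -[r in _ <= r]invrK lef_pV2 ?posrE ?invr_gt0 ?ltr0Sn //.
by apply: ltW; apply: lt_le_trans h _; rewrite ler_nat.
Qed.

Lemma ereal_le0 (R : realType) (x : \bar R) :
  (forall j : nat, (x <= ((j.+1%:R : R)^-1)%:E)%E) -> (x <= 0)%E.
Proof.
move=> H; apply/lee_addgt0Pr => e e0; rewrite add0e.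
have [j hj] := small_inv e0.
by apply: le_trans (H j) _; rewrite lee_fin.
Qed.

Lemma bad_negligible (R : realType) (N : nat) (P : R -> 'rV[R]_N -> Prop)
  (x : R -> 'rV[R]_N) (n : nat) :
  ae_RN P ->
  (@lebesgue_measure R).-negligible
    [set t | forall p : 'rV[R]_N,
       (forall i, `|p 0 i - x t 0 i| <= (n.+1%:R)^-1) -> ~ P t p].
Proof.
move=> HS.
set B := [set t | _].
pose rho : R := (n.+1%:R)^-1.
have rho0 : 0 < rho by rewrite invr_gt0 ltr0Sn.
pose L := (2 * rho) ^+ N.
have L0 : 0 < L by rewrite exprn_gt0 // mulr_gt0.
have Hj : forall j : nat, exists D : set R, [/\ measurable D, B `<=` D &
    (lebesgue_measure D <= ((j.+1%:R : R)^-1)%:E)%E].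
  move=> j; pose eps := L * (j.+1%:R)^-1.
  have eps0 : 0 < eps by rewrite mulr_gt0 // invr_gt0 ltr0Sn.
  have [a [b [a' [b' [cov hsum]]]]] := HS eps eps0.
  pose V k := \prod_(i < N) blen a' b' i k.
  have V0 : forall k, 0 <= V k.
    by move=> k; apply: prodr_ge0 => i _; rewrite /blen le_max lexx.
  pose g t := (\sum_(k <oo) (V k * \1_(`[a k, b k]%classic) t)%:E : \bar R)%E.
  have mg : measurable_fun setT g by exact: mser.
  pose D := [set: R] `&` [set t | ((cst L%:E) t <= g t)%E].
  have mD : measurable D.
    by apply: measurable_lee => //; exact: measurable_cst.
  exists D; split => //.
    move=> t Bt; split => //=.
    have := @geo R N a' b' (fun k => (a k <= t <= b k)) (x t) rho rho0 N (leqnn N) (x t).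
    move=> /(_ _) H; apply: le_trans (H _) _.
      move=> p hp _.
      have Sp : [set q | ~ P q.1 q.2] (t, p) := Bt p (fun i => hp i (ltn_ord i)).
      have [k _ [hk1 hk2]] := cov _ Sp.
      by exists k; split => // i; exact: hk2 i.
    apply: lee_nneseries.
    - by move=> k _ _; rewrite lee_fin gterm_ge0.
    - move=> k _; rewrite lee_fin /gterm indic_itv.
      rewrite [X in _ * X]big_pred0 => [|i]; last by rewrite leqNgt ltn_ord.
      rewrite mulr1 mulrC /V.
      by rewrite (eq_bigl xpredT) // => i; rewrite ltn_ord.
  have HI : (L%:E * lebesgue_measure D <= eps%:E)%E.
    apply: (@le_trans _ _ (\int[@lebesgue_measure R]_(t in D) (cst L%:E) t)%E).
      by rewrite integral_cst.
    apply: (@le_trans _ _ (\int[@lebesgue_measure R]_(t in D) g t)%E).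
      apply: ge0_le_integral => //.
      - by move=> t _; rewrite lee_fin ltW.
      - exact: mser.
      - by move=> t [].
    apply: (@le_trans _ _ (\int[@lebesgue_measure R]_(t in setT) g t)%E).
      apply: ge0_subset_integral => //.
      by move=> t _; apply: nneseries_ge0 => k _ _; rewrite lee_fin mulr_ge0.
    rewrite int_series //; apply: nneseries_le_bound => [k|m].
      by rewrite mulr_ge0 // le_max lexx.
    have -> : \sum_(k < m) V k * Num.max 0 (b k - a k) =
        \sum_(k < m) rbox_vol (a k) (b k) (a' k) (b' k).
      by apply: eq_bigr => k _; rewrite /rbox_vol mulrC.
    exact: hsum.
  rewrite /eps EFinM in HI.
  by rewrite -(@lee_pmul2l _ L%:E).
have [D HD] := choice Hj.
exists (\bigcap_j D j); split.
- by apply: bigcapT_measurable => j; case: (HD j).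
- apply/eqP; rewrite eq_le measure_ge0 andbT; apply: ereal_le0 => j.
  case: (HD j) => mDj _ hDj; apply: le_trans hDj.
  apply: le_measure; rewrite ?inE //.
    by apply: bigcapT_measurable => k; case: (HD k).
  by move=> t; apply.
- by move=> t Bt j _; case: (HD j) => _ /(_ t Bt).
Qed.
Unset Implicit Arguments.

Theorem proposition6p1 (R : realType) (N : nat)
  (f : R -> 'rV[R]_N -> 'rV[R]_N) (alpha beta : R -> R)
  (I : set R) (x : R -> 'rV[R]_N) :
  LC f ->
  L1loc alpha -> L1loc beta -> (forall t, 0 <= beta t) ->
  ae_RN (fun t y => 2 * dotv (f t y) y <= alpha t * dotv y y + beta t) ->
  is_interval I ->
  cara_solution f I x ->
  {ae (@lebesgue_measure R), forall t, I t ->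
     2 * dotv (f t (x t)) (x t) <= alpha t * dotv (x t) (x t) + beta t}.
Proof.
move=> [_ HK] _ _ _ HS _ _.
have hL : forall n : nat, exists l : R -> R, {ae (@lebesgue_measure R), forall t,
   forall y z, Kn n y -> Kn n z -> enorm (f t y - f t z) <= l t * enorm (y - z)}.
  move=> n; have [mK [lK [_ [_ H]]]] := HK _ (@Kn_compact R N n).
  exists lK; apply: (negligibleS _ H) => t /= nG G1; apply: nG => y z hy hz.
  exact: (G1 y z hy hz).2.
have [l Hl] := choice hL.
have HLip := ae_foralln Hl.
have HB := negligible_bigcup (fun n => @bad_negligible R N _ x n HS).
apply: (negligibleS _ (negligibleU HLip HB)).
move=> t /= /not_implyP [_ hP].
have [Lt|nLt] := pselect (forall n y z, Kn n y -> Kn n z ->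
    enorm (f t y - f t z) <= l n t * enorm (y - z)); last by left.
right.
have [r [r0 Hr]] := @local_fail R N (f t) (fun n => l n t) (alpha t) (beta t) (x t) Lt hP.
have [n hn] := small_inv r0.
exists n => // p hp; apply: Hr => i; exact: le_trans (hp i) hn.
Qed.
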